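(* Let $R,S\subset\Sigma$ be finite unions of $(-m,m)$-cylinders. Then for every integer $n\ge M+2m$: if $\alpha\ge0$, $$\kappa^{-1}\mu_\phi(S)\int_\Sigma e^{\alpha r_R^{n-(M+2m)}}d\mu_\phi\le\int_S e^{\alpha r_R^n}d\mu_\phi\le\kappa\,\mu_\phi(S)e^{\alpha(M+2m)}\int_\Sigma e^{\alpha r_R^n}d\mu_\phi;$$ if $\alpha\le0$, $$\kappa^{-1}\mu_\phi(S)e^{\alpha(M+2m)}\int_\Sigma e^{\alpha r_R^n}d\mu_\phi\le\int_S e^{\alpha r_R^n}d\mu_\phi\le\kappa\,\mu_\phi(S)\int_\Sigma e^{\alpha r_R^{n-(M+2m)}}d\mu_\phi.$$
   Context: $(\Sigma,\sigma)$ is a two-sided mixing subshift of finite type on $\{1,\dots,N\}$ (sequences $x=(x_n)_{n\in\mathbb{Z}}$ with $a_{x_nx_{n+1}}=1$ for an aperiodic $0$-$1$ matrix $(a_{ij})$), $\phi$ is Hölder continuous and $\mu_\phi$ its unique equilibrium state. A $(-m,m)$-cylinder is a set $\{x: x_j=i_j,\ -m\le j\le m\}$. $M>0$ and $\kappa>1$ are constants such that for all integrable $f,g$ with $f(x)$ depending only on $(x_n)_{n\le p}$ and $g(x)$ depending only on $(x_n)_{n\ge p+M}$ (any $p$), $\kappa^{-1}\int f\,d\mu_\phi\int g\,d\mu_\phi\le\int fg\,d\mu_\phi\le\kappa\int f\,d\mu_\phi\int g\,d\mu_\phi$ (such constants exist by the $\psi$-mixing property of $\mu_\phi$). For $D\subset\Sigma$,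 $r_D(x)$ is the smallest integer $n\ge1$ with $\sigma^n x\in D$ ($+\infty$ if none), $r_D^1=r_D$, $r_D^{n+1}=r_D^n+r_D\circ\sigma^{r_D^n}$. *)

(* Defs.v *)
From HB Require Import structures.
From mathcomp Require Import all_boot all_order all_algebra.
From mathcomp Require Import all_classical all_reals all_analysis.
Unset Printing Implicit Defensive.
Import Order.TTheory GRing.Theory Num.Theory numFieldNormedType.Exports.
Local Open Scope classical_set_scope.
Local Open Scope ring_scope.

(* Alphabet: 'I_N.+1 (N.+1 symbols, standing for {1,...,N+1}).
   Full sequence space: int -> 'I_N.+1.  The SFT Sigma_A is a subset of it,
   and all measures considered are carried by Sigma_A. *)

(* technical: the alphabet is inhabited (needed for the measurable structure) *)
HB.instance Definition _ (n : nat) := isPointed.Build 'I_n.+1 ord0.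

Definition zero_one_mx {N : nat} (A : 'M[int]_N.+1) : Prop :=
  forall i j, A i j = 0 \/ A i j = 1.

Definition aperiodic_mx {N : nat} (A : 'M[int]_N.+1) : Prop :=
  exists k : nat, (0 < k)%N /\ forall i j, 0 < (A ^+ k) i j.

Definition SigmaA {N : nat} (A : 'M[int]_N.+1) : set (int -> 'I_N.+1) :=
  [set x | forall n : int, A (x n) (x (n + 1)) = 1].

Definition shift {N : nat} (x : int -> 'I_N.+1) : int -> 'I_N.+1 :=
  fun n => x (n + 1).

Definition iter_shift {N : nat} (k : nat) (x : int -> 'I_N.+1) :
  int -> 'I_N.+1 := iter k (@shift N) x.

(* coordinate cylinders of the full sequence space: they generate the
   product (= Borel) sigma-algebra *)
Definition cylinders (N : nat) : set (set (int -> 'I_N.+1)) :=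
  [set C | exists (m : nat) (w : int -> 'I_N.+1),
     C = [set x | forall j : int, (- (m%:Z) <= j <= m%:Z) -> x j = w j]].

Notation Seq N := (g_sigma_algebraType (cylinders N)).

Definition cyl {N : nat} (A : 'M[int]_N.+1) (m : nat) (w : int -> 'I_N.+1)
  : set (int -> 'I_N.+1) :=
  [set x | SigmaA A x /\ forall j : int, (- (m%:Z) <= j <= m%:Z) -> x j = w j].

Definition cyl_union {N : nat} (A : 'M[int]_N.+1) (m : nat)
  (S : set (int -> 'I_N.+1)) : Prop :=
  exists s : seq (int -> 'I_N.+1), S = \big[setU/set0]_(w <- s) cyl A m w.

(* Hoelder continuity on Sigma_A, for the metric
   d(x,y) = theta0^{min{|n| : x_n <> y_n}} (any theta0 in (0,1)) *)
Definition holder {R : realType} {N : nat} (A : 'M[int]_N.+1)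
  (phi : (int -> 'I_N.+1) -> R) : Prop :=
  exists (C theta : R), 0 < theta < 1 /\
    forall (x y : int -> 'I_N.+1) (n : nat), SigmaA A x -> SigmaA A y ->
      (forall j : int, (- (n%:Z) <= j <= n%:Z) -> x j = y j) ->
      `|phi x - phi y| <= C * theta ^+ n.

Definition invariant_on {R : realType} {N : nat} (A : 'M[int]_N.+1)
  (nu : probability (Seq N) R) : Prop :=
  nu (SigmaA A) = 1%E /\
  forall B : set (Seq N), measurable B -> nu (@shift N @^-1` B) = nu B.

Definition word_cyl {N : nat} (n : nat) (w : n.-tuple 'I_N.+1)
  : set (Seq N) :=
  [set x | forall i : 'I_n, x (i%:Z) = tnth w i].

Definition Hn {R : realType} {N : nat} (nu : probability (Seq N) R) (n : nat)
  : R :=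
  - \sum_(w : n.-tuple 'I_N.+1)
       fine (nu (@word_cyl N n w)) * ln (fine (nu (@word_cyl N n w))).

(* measure-theoretic entropy h_nu(sigma) = lim_n H_nu(P_n)/n, with P_n the
   partition into n-cylinders (generating partition of 1-cylinders) *)
Definition entropy {R : realType} {N : nat} (nu : probability (Seq N) R) : R :=
  limn (fun n : nat => Hn nu n.+1 / (n.+1)%:R).

Definition equilibrium_state {R : realType} {N : nat} (A : 'M[int]_N.+1)
  (phi : (int -> 'I_N.+1) -> R) (mu : probability (Seq N) R) : Prop :=
  invariant_on A mu /\
  forall nu : probability (Seq N) R, invariant_on A nu ->
    entropy nu + Rintegral nu setT phi <= entropy mu + Rintegral mu setT phi.

(* r_D(x): smallest n >= 1 with sigma^n x in D; None stands for +oo *)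
Definition first_return {N : nat} (D : set (int -> 'I_N.+1))
  (x : int -> 'I_N.+1) : option nat :=
  match pselect (exists k : nat, `[< (0 < k)%N /\ D (iter_shift k x) >]) with
  | left H => Some (ex_minn H)
  | right _ => None
  end.

Fixpoint nth_return {N : nat} (D : set (int -> 'I_N.+1)) (n : nat)
  (x : int -> 'I_N.+1) : option nat :=
  match n with
  | 0 => Some 0%N
  | n'.+1 =>
      match nth_return D n' x with
      | Some k => match first_return D (iter_shift k x) with
                  | Some l => Some (k + l)%N
                  | None => None
                  end
      | None => None
      end
  end.

Definition opt_to_ereal {R : realType} (o : option nat) : \bar R :=
  match o with Some k => (k%:R)%:E | None => +oo%E end.

(* e^{alpha r_D^n(x)} in the extended reals (e^{+oo} = +oo, e^{-oo} = 0,
   and 0 * (+oo) = 0, so that e^{0 r} = 1) *)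
Definition exp_return {R : realType} {N : nat} (D : set (int -> 'I_N.+1))
  (alpha : R) (n : nat) (x : int -> 'I_N.+1) : \bar R :=
  expeR (alpha%:E * @opt_to_ereal R (nth_return D n x))%E.

(* Main.v *)
Require Import Defs.
From HB Require Import structures.
From mathcomp Require Import all_boot all_order all_algebra.
From mathcomp Require Import all_classical all_reals all_analysis measurable_realfun.
From mathcomp Require Import zify.
Import Order.TTheory GRing.Theory Num.Theory numFieldNormedType.Exports.
Local Open Scope classical_set_scope.
Local Open Scope ring_scope.

Lemma iter_shiftE {N : nat} (j : nat) (x : int -> 'I_N.+1) (i : int) :
  iter_shift j x i = x (i + j%:Z).
Proof.
elim: j i => [|j IH] i; first by rewrite addr0.
rewrite /iter_shift iterS; have := IH (i + 1); rewrite /iter_shift => H.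
by rewrite /Defs.shift H; congr (x _); lia.
Qed.

Lemma iter_shiftD {N : nat} (j k : nat) (x : int -> 'I_N.+1) :
  iter_shift j (iter_shift k x) = iter_shift (j + k) x.
Proof. by rewrite /iter_shift iterD. Qed.

Definition hit {N : nat} (D : set (int -> 'I_N.+1)) (x : int -> 'I_N.+1)
  (j : nat) : bool := `[< D (iter_shift j x) >].

Definition cnt {N : nat} (D : set (int -> 'I_N.+1)) (x : int -> 'I_N.+1)
  (t : nat) : nat := count (hit D x) (iota 1 t).

Lemma cnt_add {N : nat} D (x : int -> 'I_N.+1) k t :
  cnt D x (k + t) = (cnt D x k + cnt D (iter_shift k x) t)%N.
Proof.
rewrite /cnt iotaD count_cat; congr addn.
rewrite addnC iotaDl count_map; apply: eq_count => j /=.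
by rewrite /hit iter_shiftD addnC.
Qed.

Lemma cnt0 {N : nat} D (x : int -> 'I_N.+1) : cnt D x 0 = 0%N.
Proof. by []. Qed.

Lemma cntS {N : nat} D (x : int -> 'I_N.+1) t :
  cnt D x t.+1 = (cnt D x t + hit D x t.+1)%N.
Proof.
rewrite -[in LHS]addn1 cnt_add; congr addn.
by rewrite /cnt /= addn0 /hit iter_shiftD add1n.
Qed.

Lemma cnt_le {N : nat} D (x : int -> 'I_N.+1) t : (cnt D x t <= t)%N.
Proof. by rewrite /cnt; apply: leq_trans (count_size _ _) _; rewrite size_iota. Qed.

Lemma cnt_mono {N : nat} D (x : int -> 'I_N.+1) j k :
  (j <= k)%N -> (cnt D x j <= cnt D x k)%N.
Proof. by move=> /subnKC <-; rewrite cnt_add leq_addr. Qed.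

Lemma first_return_spec {N : nat} D (x : int -> 'I_N.+1) :
  match first_return D x with
  | Some l => (0 < l)%N /\ D (iter_shift l x) /\
              forall j, (0 < j < l)%N -> ~ D (iter_shift j x)
  | None => forall j, (0 < j)%N -> ~ D (iter_shift j x)
  end.
Proof.
rewrite /first_return; case: pselect => [H|H].
  case: ex_minnP => l /asboolP [l0 Dl] Hmin /=; split=> //; split=> // j /andP[j0 jl] Dj.
  have := Hmin j (asboolT (conj j0 Dj)).
  by rewrite leqNgt jl.
move=> j j0 Dj; apply: H; exists j; exact/asboolP.
Qed.

Lemma nth_return_spec {N : nat} D n (x : int -> 'I_N.+1) :
  match nth_return D n x with
  | Some k => (n <= cnt D x k)%N /\ forall j, (j < k)%N -> (cnt D x j < n)%N
  | None => forall j, (cnt D x j < n)%N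
  end.
Proof.
elim: n => [|n IH] /=; first by split.
case E: (nth_return D n x) IH => [k|] IH; last by move=> j; apply: ltnW (IH j).
case: IH => [nk kmin]; clear E.
have ck : cnt D x k = n.
  apply/eqP; rewrite eqn_leq nk andbT.
  case: k nk kmin => [|k] nk kmin; first by rewrite cnt0.
  by rewrite cntS; have := kmin k (ltnSn k); case: hit; rewrite ?addn1 ?addn0 //; move=> /ltnW.
have := first_return_spec D (iter_shift k x).
case: (first_return D (iter_shift k x)) => [l|].
  move=> [l0 [Dl Hl]].
  have cl : forall t, (t < l)%N -> cnt D (iter_shift k x) t = 0%N.
    elim=> [|t IHt] tl //; rewrite cntS IHt ?(ltnW tl) //.
    rewrite /hit; case: asboolP => // Dt; exfalso; apply: (Hl t.+1) => //.
  have cll : cnt D (iter_shift k x) l = 1%N.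
    case: l l0 Dl Hl cl => // l _ Dl Hl cl.
    by rewrite cntS cl // /hit asboolT.
  split; first by rewrite cnt_add ck cll addn1.
  move=> j jl; case: (ltnP j k) => jk.
    by apply: leq_trans (kmin j jk) _.
  rewrite -(subnKC jk) cnt_add ck cl ?addn0 //.
  by rewrite ltn_subLR.
move=> Hn j; case: (leqP j k) => jk.
  by rewrite ltnS -ck cnt_mono.
have c0 : forall t, cnt D (iter_shift k x) t = 0%N.
  elim=> [|t IHt] //; rewrite cntS IHt /hit; case: asboolP => // Dt.
  by exfalso; apply: (Hn t.+1).
by rewrite -(subnKC (ltnW jk)) cnt_add ck c0 addn0.
Qed.

Definition rspec (c : nat -> nat) (n : nat) (o : option nat) : Prop :=
  match o with
  | Some k => (n <= c k)%N /\ forall j, (j < k)%N -> (c j < n)%N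
  | None => forall j, (c j < n)%N
  end.

Lemma rspec_det c n o1 o2 : rspec c n o1 -> rspec c n o2 -> o1 = o2.
Proof.
case: o1 => [k1|]; case: o2 => [k2|] //=.
- move=> [h1 m1] [h2 m2]; congr Some; apply/eqP; rewrite eqn_leq.
  apply/andP; split; rewrite leqNgt; apply/negP.
    by move=> /m1; rewrite ltnNge h2.
  by move=> /m2; rewrite ltnNge h1.
- by move=> [h1 _] /(_ k1); rewrite ltnNge h1.
- by move=> H [h2 _]; move: (H k2); rewrite ltnNge h2.
Qed.

Lemma nth_return_ext {N : nat} (D D' : set (int -> 'I_N.+1)) x x' n :
  (forall j, (0 < j)%N -> (D (iter_shift j x) <-> D' (iter_shift j x'))) ->
  nth_return D n x = nth_return D' n x'.
Proof.
move=> HD.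
have cE : cnt D x =1 cnt D' x'.
  move=> t; rewrite /cnt; apply: eq_in_count => j; rewrite mem_iota => /andP[j1 _].
  rewrite /hit; apply/idP/idP => /asboolP H; apply/asboolP; apply/(HD j j1) => //.
apply: (@rspec_det (cnt D x) n); first exact: nth_return_spec.
have := nth_return_spec D' n x'.
case: (nth_return D' n x') => [k|] /=.
  by move=> [h1 h2]; split; [rewrite cE | move=> j /h2; rewrite cE].
by move=> H j; rewrite cE.
Qed.

Lemma nth_le {N : nat} D n (y : int -> 'I_N.+1) t :
  (n <= cnt D y t)%N -> exists k, nth_return D n y = Some k /\ (k <= t)%N.
Proof.
move=> H; have := nth_return_spec D n y.
case: (nth_return D n y) => [k|]; last by move/(_ t); rewrite ltnNge H.
move=> [_ kmin]; exists k; split => //; rewrite leqNgt; apply/negP => /kmin.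
by rewrite ltnNge H.
Qed.

Definition ole (o1 o2 : option nat) : Prop :=
  match o2 with
  | None => True
  | Some b => match o1 with Some a => (a <= b)%N | None => False end
  end.

Lemma nth_U {N : nat} D n (x : int -> 'I_N.+1) K :
  ole (nth_return D n x) (omap (fun k => k + K)%N (nth_return D n (iter_shift K x))).
Proof.
have := nth_return_spec D n (iter_shift K x).
case: (nth_return D n (iter_shift K x)) => [k [nk _]|] //=.
have : (n <= cnt D x (K + k))%N by rewrite cnt_add; apply: leq_trans nk (leq_addl _ _).
by move=> /nth_le [k' [-> ?]]; rewrite addnC.
Qed.

Lemma nth_L {N : nat} D n (x : int -> 'I_N.+1) K :
  ole (nth_return D (n - K) (iter_shift K x)) (nth_return D n x).
Proof.
have := nth_return_spec D n x.
case: (nth_return D n x) => [k [nk _]|] //=.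
case: (leqP n K) => nK.
  by move: nK; rewrite -subn_eq0 => /eqP ->.
have Kk : (K <= k)%N.
  by apply: leq_trans (ltnW nK) (leq_trans nk (cnt_le _ _ _)).
have : (n - K <= cnt D (iter_shift K x) (k - K))%N.
  rewrite leq_subLR; move: nk; rewrite -{1}(subnKC Kk) cnt_add => nk.
  apply: leq_trans nk _; rewrite leq_add2r; exact: cnt_le.
move=> /nth_le [k' [-> ?]]; apply: leq_trans _ (leq_subr K k); done.
Qed.

Definition ev {R : realType} (alpha : R) (o : option nat) : \bar R :=
  expeR (alpha%:E * @opt_to_ereal R o)%E.

Lemma exp_returnE {R : realType} {N : nat} (D : set (int -> 'I_N.+1)) (alpha : R) n x :
  exp_return D alpha n x = ev alpha (nth_return D n x).
Proof. by []. Qed.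

Lemma ev_ge0 {R : realType} (alpha : R) o : (0 <= ev alpha o)%E.
Proof. exact: expeR_ge0. Qed.

Lemma ev_alpha0 {R : realType} o : ev (0 : R) o = 1%E.
Proof. by rewrite /ev mul0e expeR0. Qed.

Lemma ev_Some {R : realType} (alpha : R) a :
  ev alpha (Some a) = (expR (alpha * a%:R))%:E.
Proof. by []. Qed.

Lemma ev_None_pos {R : realType} (alpha : R) : 0 < alpha -> ev alpha None = +oo%E.
Proof. by move=> a0; rewrite /ev /= mulry gtr0_sg // mul1e. Qed.

Lemma ev_None_neg {R : realType} (alpha : R) : alpha < 0 -> ev alpha None = 0%E.
Proof. by move=> a0; rewrite /ev /= mulry ltr0_sg // mulN1e. Qed.

Lemma ev_mono_pos {R : realType} (alpha : R) o1 o2 :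
  0 <= alpha -> ole o1 o2 -> (ev alpha o1 <= ev alpha o2)%E.
Proof.
rewrite le0r => /orP[/eqP ->|a0]; first by rewrite !ev_alpha0.
case: o2 => [b|] /=; last by rewrite ev_None_pos // leey.
case: o1 => [a|] //= ab; rewrite !ev_Some lee_fin ler_expR.
by apply: ler_wpM2l; [exact: ltW | rewrite ler_nat].
Qed.

Lemma ev_mono_neg {R : realType} (alpha : R) o1 o2 :
  alpha <= 0 -> ole o1 o2 -> (ev alpha o2 <= ev alpha o1)%E.
Proof.
rewrite le_eqVlt => /orP[/eqP ->|a0]; first by rewrite !ev_alpha0.
case: o2 => [b|] /=; last by rewrite ev_None_neg // ev_ge0.
case: o1 => [a|] //= ab; rewrite !ev_Some lee_fin ler_expR.
by apply: ler_wnM2l; [exact: ltW | rewrite ler_nat].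
Qed.

Lemma ev_shift {R : realType} (alpha : R) K o :
  ev alpha (omap (fun k => k + K)%N o) = ((expR (alpha * K%:R))%:E * ev alpha o)%E.
Proof.
case: o => [a|] /=.
  by rewrite !ev_Some -EFinM -expRD natrD mulrDr addrC.
case: (ltgtP alpha 0) => [a0|a0|->].
- by rewrite ev_None_neg // mule0.
- by rewrite ev_None_pos // gt0_muley // lte_fin expR_gt0.
- by rewrite !ev_alpha0 mul0r expR0 mule1.
Qed.

Definition agree {N : nat} (k : nat) (x y : int -> 'I_N.+1) : Prop :=
  forall j : int, (- (k%:Z) <= j <= k%:Z) -> x j = y j.

Definition localr {N : nat} (k : nat) (E : set (int -> 'I_N.+1)) : Prop :=
  forall x y, agree k x y -> E x -> E y.

Lemma agree_sym {N : nat} k (x y : int -> 'I_N.+1) : agree k x y -> agree k y x.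
Proof. by move=> H j /H ->. Qed.

Lemma agree_mono {N : nat} k k' (x y : int -> 'I_N.+1) :
  (k <= k')%N -> agree k' x y -> agree k x y.
Proof. by move=> kk H j jk; apply: H; lia. Qed.

Lemma agree_shift {N : nat} m j (x y : int -> 'I_N.+1) :
  agree (m + j) x y -> agree m (iter_shift j x) (iter_shift j y).
Proof. by move=> H i im; rewrite !iter_shiftE; apply: H; lia. Qed.

Lemma localr_iff {N : nat} k (E : set (int -> 'I_N.+1)) x y :
  localr k E -> agree k x y -> (E x <-> E y).
Proof. by move=> lE a; split; apply: lE => //; exact: agree_sym. Qed.

Definition restr {N : nat} (k : nat) (x : int -> 'I_N.+1) : seq 'I_N.+1 :=
  [seq x (i%:Z - k%:Z) | i <- iota 0 (2 * k).+1].

Lemma restr_agree {N : nat} k (x y : int -> 'I_N.+1) :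
  restr k x = restr k y -> agree k x y.
Proof.
move=> /eq_in_map H j jk.
have := H (absz (j + k%:Z)); rewrite mem_iota add0n.
have -> : ((absz (j + k%:Z))%:Z - k%:Z) = j by lia.
by apply; apply/andP; split => //; lia.
Qed.

Lemma agree_restr {N : nat} k (x y : int -> 'I_N.+1) :
  agree k x y -> restr k x = restr k y.
Proof.
move=> H; apply/eq_in_map => i; rewrite mem_iota add0n => /andP[_ ik].
by apply: H; lia.
Qed.

Lemma cyl_measurable {N : nat} k (y : int -> 'I_N.+1) :
  measurable ([set x | agree k x y] : set (Seq N)).
Proof. by apply: sub_gen_smallest; exists k, y. Qed.

Lemma localr_measurable {N : nat} k (E : set (Seq N)) :
  localr k E -> measurable E.
Proof.
move=> lE.
have -> : E = \bigcup_(s : seq 'I_N.+1) (E `&` [set x | restr k x = s]).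
  apply/seteqP; split => [x Ex|x [s _ []//]].
  by exists (restr k x).
apply: countable_bigcupT_measurable; first exact: countableP.
move=> s; case: (pselect (exists y, E y /\ restr k y = s)) => [[y [Ey ys]]|ny].
  have -> : E `&` [set x | restr k x = s] = [set x | agree k x y].
    apply/seteqP; split => x /=.
      by move=> [_ xs]; apply: restr_agree; rewrite xs ys.
    move=> a; split; last by rewrite -ys; exact: agree_restr.
    by apply: (lE y) => //; exact: agree_sym.
  exact: cyl_measurable.
have -> : E `&` [set x | restr k x = s] = set0.
  by apply/seteqP; split => x //= [Ex xs]; apply: ny; exists x.
exact: measurable0.
Qed.

Lemma localr_setU {N : nat} k (E1 E2 : set (int -> 'I_N.+1)) :
  localr k E1 -> localr k E2 -> localr k (E1 `|` E2).
Proof. by move=> l1 l2 x y a [/(l1 _ _ a)|/(l2 _ _ a)]; [left|right]. Qed.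

Lemma localr_mono {N : nat} k k' (E : set (int -> 'I_N.+1)) :
  (k <= k')%N -> localr k E -> localr k' E.
Proof. by move=> kk lE x y a; apply: lE; exact: agree_mono a. Qed.

Lemma localr_shift {N : nat} r K (E : set (int -> 'I_N.+1)) :
  localr r E -> localr (r + K) [set x | E (iter_shift K x)].
Proof. by move=> lE x y a /=; apply: lE; exact: agree_shift. Qed.

Lemma measurable_andP {d} {T : measurableType d} (B : set T) (P : Prop) :
  measurable B -> measurable [set x | B x /\ P].
Proof.
move=> mB; case: (pselect P) => p.
  by have -> : [set x | B x /\ P] = B by apply/seteqP; split => x //= [].
by have -> : [set x | B x /\ P] = set0 by apply/seteqP; split => x //= [].
Qed.

Lemma meas_opt {N : nat} (F : Seq N -> option nat) :
  (forall k, measurable [set x | F x = Some k]) ->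
  forall d' (T' : measurableType d') (h : option nat -> T'),
  measurable_fun setT (fun x => h (F x)).
Proof.
move=> mF d' T' h _ Y mY; rewrite setTI.
have -> : (fun x => h (F x)) @^-1` Y =
  \bigcup_k [set x | F x = Some k /\ Y (h (Some k))] `|`
  [set x | (~` \bigcup_k [set x | F x = Some k]) x /\ Y (h None)].
  apply/seteqP; split => x /=.
    case E: (F x) => [k|] Yx; first by left; exists k.
    by right; split => // -[k _ /=]; rewrite E.
  move=> [[k _ /= [-> //]]|[nF YN]].
  case E: (F x) => [k|] //; exfalso; apply: nF; by exists k.
apply: measurableU.
  by apply: bigcupT_measurable => k; apply: (measurable_andP [set x | F x = Some k]).
apply: (measurable_andP (~` \bigcup_k [set x | F x = Some k])).
apply: measurableC; exact: bigcupT_measurable.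
Qed.

Lemma fiber_local {N : nat} m (D : set (int -> 'I_N.+1)) n k :
  localr m D -> localr (k + m) [set x | nth_return D n x = Some k].
Proof.
move=> lD x y a /= E.
have cE : forall j, (j <= k)%N -> cnt D x j = cnt D y j.
  elim=> [|j IH] jk //; rewrite !cntS IH ?(ltnW jk) //; congr (_ + nat_of_bool _)%N.
  have ag : agree m (iter_shift j.+1 x) (iter_shift j.+1 y).
    by apply: agree_shift; apply: agree_mono a; lia.
  by rewrite /hit (propext (localr_iff _ _ _ _ lD ag)).
have := nth_return_spec D n x; rewrite E => -[nk kmin].
apply: (@rspec_det (cnt D y) n); first exact: nth_return_spec.
split; first by rewrite -cE.
by move=> j jk; rewrite -cE ?(ltnW jk) // kmin.
Qed.

Lemma SigmaA_shift {N : nat} (A : 'M[int]_N.+1) j x :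
  SigmaA A x -> SigmaA A (iter_shift j x).
Proof.
move=> H n; rewrite !iter_shiftE; have := H (n + j%:Z).
by have -> : n + 1 + j%:Z = n + j%:Z + 1 by lia.
Qed.

Lemma SigmaA_unshift {N : nat} (A : 'M[int]_N.+1) j x :
  SigmaA A (iter_shift j x) -> SigmaA A x.
Proof.
move=> H n; have := H (n - j%:Z); rewrite !iter_shiftE.
have -> : n - j%:Z + j%:Z = n by lia.
by have -> : n - j%:Z + 1 + j%:Z = n + 1 by lia.
Qed.

Lemma SigmaA_measurable {N : nat} (A : 'M[int]_N.+1) :
  measurable (SigmaA A : set (Seq N)).
Proof.
have -> : (SigmaA A : set (Seq N)) = \bigcap_(k : nat)
    [set x | forall n : int, (- (k%:Z) <= n <= k%:Z) -> A (x n) (x (n + 1)) = 1].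
  apply/seteqP; split => x /=; first by move=> H k _ n _; exact: H.
  move=> H n; apply: (H (absz n)) => //; lia.
apply: bigcapT_measurable => k; apply: (@localr_measurable N k.+1).
move=> x y a /= H n nk.
rewrite -(a n); last by lia.
by rewrite -(a (n + 1)); [exact: H | lia].
Qed.

Lemma cyl_union_decomp {N : nat} (A : 'M[int]_N.+1) m (S : set (int -> 'I_N.+1)) :
  cyl_union A m S -> exists S', localr m S' /\ S = SigmaA A `&` S'.
Proof.
case=> s ->; exists (\big[setU/set0]_(w <- s) [set x | agree m x w]).
elim: s => [|w s [IH1 IH2]]; rewrite ?big_nil ?big_cons.
  by split; [move=> x y _ | rewrite setI0].
split; last by rewrite IH2 setIUr.
apply: localr_setU => // x y a /= H j jm; rewrite -(a j jm); exact: H.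
Qed.

Lemma nth_Rs_in {N : nat} (A : 'M[int]_N.+1) (R' : set (int -> 'I_N.+1)) n x :
  SigmaA A x -> nth_return (SigmaA A `&` R') n x = nth_return R' n x.
Proof.
move=> Sx; apply: nth_return_ext => j _; split; first by case.
by move=> H; split => //; exact: SigmaA_shift.
Qed.

Lemma nth_Rs_out {N : nat} (A : 'M[int]_N.+1) (R' : set (int -> 'I_N.+1)) n x :
  ~ SigmaA A x -> nth_return (SigmaA A `&` R') n x = nth_return set0 n x.
Proof.
move=> Sx; apply: nth_return_ext => j _; split => //.
by case=> /SigmaA_unshift.
Qed.

Lemma fiber_meas {N : nat} m (D : set (int -> 'I_N.+1)) n k :
  localr m D -> measurable ([set x | nth_return D n x = Some k] : set (Seq N)).
Proof. by move=> lD; apply: (@localr_measurable N (k + m)); exact: fiber_local. Qed.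

Lemma fiber_meas_Rs {N : nat} (A : 'M[int]_N.+1) m (R' : set (int -> 'I_N.+1)) n k :
  localr m R' ->
  measurable ([set x | nth_return (SigmaA A `&` R') n x = Some k] : set (Seq N)).
Proof.
move=> lR.
have -> : ([set x | nth_return (SigmaA A `&` R') n x = Some k] : set (Seq N)) =
   (SigmaA A `&` [set x | nth_return R' n x = Some k]) `|`
   (~` SigmaA A `&` [set x | nth_return set0 n x = Some k]).
  apply/seteqP; split => x /=.
    case: (pselect (SigmaA A x)) => Sx.
      by rewrite nth_Rs_in // => ?; left.
    by rewrite nth_Rs_out // => ?; right.
  by move=> [[Sx H]|[Sx H]]; [rewrite nth_Rs_in | rewrite nth_Rs_out].
apply: measurableU; apply: measurableI.
- exact: SigmaA_measurable.
- exact: (fiber_meas _ _ _ _ lR).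
- apply: measurableC; exact: SigmaA_measurable.
- by apply: (fiber_meas 0) => x y.
Qed.

Lemma fiber_meas_shift {N : nat} m (D : set (int -> 'I_N.+1)) n K k :
  localr m D ->
  measurable ([set x | nth_return D n (iter_shift K x) = Some k] : set (Seq N)).
Proof.
move=> lD; apply: (@localr_measurable N (k + m + K)).
exact: (@localr_shift N (k + m) K [set x | nth_return D n x = Some k]) (fiber_local _ _ _ _ lD).
Qed.

Lemma iter_shift_measurable {N : nat} K :
  measurable_fun setT (iter_shift K : Seq N -> Seq N).
Proof.
apply: (@measurability _ _ (Seq N) (Seq N) setT (iter_shift K) (cylinders N)) => //.
move=> _ [C [k [w ->]] <-]; rewrite setTI.
apply: (@localr_measurable N (k + K)).
apply: (@localr_shift N k K [set x | forall j : int, (- (k%:Z) <= j <= k%:Z) -> x j = w j]).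
by move=> x y a /= H j jk; rewrite -(a j jk); exact: H.
Qed.

Lemma mu_shiftK {R : realType} {N : nat} (mu : probability (Seq N) R)
  (Hinv : forall B : set (Seq N), measurable B -> mu (@Defs.shift N @^-1` B) = mu B)
  K (B : set (Seq N)) :
  measurable B -> mu ((iter_shift K : Seq N -> Seq N) @^-1` B) = mu B.
Proof.
elim: K B => [|K IH] B mB; first by [].
have -> : (iter_shift K.+1 : Seq N -> Seq N) @^-1` B =
          (iter_shift K : Seq N -> Seq N) @^-1` (@Defs.shift N @^-1` B) by [].
rewrite IH ?Hinv //.
have := iter_shift_measurable (N := N) 1 measurableT _ mB.
by rewrite setTI.
Qed.

Lemma ae_Sigma {R : realType} {N : nat} (A : 'M[int]_N.+1) (mu : probability (Seq N) R)
  (hS : mu (SigmaA A) = 1%E) (P : Seq N -> Prop) :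
  (forall x, SigmaA A x -> P x) -> {ae mu, forall x, P x}.
Proof.
move=> H; exists (~` SigmaA A); split.
- apply: measurableC; exact: SigmaA_measurable.
- by rewrite probability_setC ?hS ?subee //; exact: SigmaA_measurable.
- by move=> x /= nP Sx; apply: nP; exact: H.
Qed.

Definition emin {R : realType} (a b : \bar R) : \bar R := mine a b.

Lemma ge_nat_ey {R : realType} (e : \bar R) : (forall L : nat, (L%:R)%:E <= e)%E -> e = +oo%E.
Proof.
case: e => [r| |] // H.
  by have := H (Num.truncn r).+1; rewrite lee_fin leNgt truncnS_gt.
by have := H 0%N.
Qed.

Lemma sup_min {R : realType} (h : \bar R) : (0 <= h)%E ->
  ereal_sup (range (fun L : nat => mine h (L%:R)%:E)) = h.
Proof.
move=> h0; apply/eqP; rewrite eq_le; apply/andP; split.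
  by apply: ge_ereal_sup => _ [L _ <-]; rewrite ge_min lexx.
case: h h0 => [r| |] // h0.
  apply: ereal_sup_ge; exists (mine r%:E ((Num.truncn r).+1%:R)%:E).
    by exists (Num.truncn r).+1.
  by rewrite min_l // lee_fin ltW // truncnS_gt.
rewrite leye_eq; apply/eqP; apply: ge_nat_ey => L.
by apply: ereal_sup_ubound; exists L => //; rewrite min_r ?leey.
Qed.

Lemma lim_min {R : realType} (h : \bar R) : (0 <= h)%E ->
  limn (fun L : nat => mine h (L%:R)%:E) = h.
Proof.
move=> h0; rewrite -[X in _ = X](sup_min _ h0); apply: cvg_lim => //.
apply: ereal_nondecreasing_cvgn => a b ab.
by rewrite le_min ge_min lexx /= ge_min lee_fin ler_nat ab orbT.
Qed.

Lemma int_sup {R : realType} {d} {T : measurableType d} (mu : measure T R)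
  (H : T -> \bar R) : (forall x, 0 <= H x)%E ->
  (forall L : nat, measurable_fun [set: T] (fun x : T => emin (H x) (L%:R)%:E)) ->
  (\int[mu]_x H x = ereal_sup (range (fun L : nat => \int[mu]_x emin (H x) (L%:R)%:E)))%E.
Proof.
move=> H0 mH.
have homo : forall x, {homo (fun L : nat => emin (H x) (L%:R)%:E) : a b / (a <= b)%N >-> (a <= b)%E}.
  by move=> x a b ab; rewrite /emin le_min ge_min lexx /= ge_min lee_fin ler_nat ab orbT.
have ge0 : forall (L : nat) x, [set: T] x -> (0 <= emin (H x) (L%:R)%:E)%E.
  by move=> L x _; rewrite /emin le_min H0 /= lee_fin ler0n.
transitivity (\int[mu]_x limn (fun L : nat => emin (H x) (L%:R)%:E))%E.
  apply: eq_integral => x _; rewrite /emin lim_min //; exact: H0.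
rewrite (@monotone_convergence _ _ _ mu setT measurableT
  (fun (L : nat) x => emin (H x) (L%:R)%:E)) //.
apply: cvg_lim => //; apply: ereal_nondecreasing_cvgn => a b ab.
apply: ge0_le_integral => // [x _|x _]; [exact: ge0 | exact: homo].
Qed.

Lemma int_shift {R : realType} {N : nat} (mu : probability (Seq N) R)
  (Hinv : forall B : set (Seq N), measurable B -> mu (@Defs.shift N @^-1` B) = mu B)
  K (H : Seq N -> \bar R) :
  measurable_fun setT H -> (forall x, 0 <= H x)%E ->
  (\int[mu]_x H (iter_shift K x) = \int[mu]_x H x)%E.
Proof.
move=> mH H0.
have mphi := iter_shift_measurable (N := N) K.
transitivity (\int[pushforward mu (iter_shift K : Seq N -> Seq N)]_x H x)%E.
  by rewrite ge0_integral_pushforward // preimage_setT.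
apply: eq_measure_integral => B mB _.
by rewrite /pushforward; apply: mu_shiftK.
Qed.

Lemma patch_meas {R : realType} {d} {T : measurableType d} (D : set T) (f : T -> \bar R) :
  measurable D -> measurable_fun setT f -> measurable_fun setT (f \_ D).
Proof.
move=> mD mf; apply/(measurable_restrictT _ mD).
exact: measurable_funS mf.
Qed.

Lemma patch_val {R : realType} {T : Type} (D : set T) (f : T -> \bar R) x :
  (f \_ D) x = if x \in D then f x else 0%E.
Proof. by rewrite patchE. Qed.

Lemma int_bounded {R : realType} {d} {T : measurableType d} (mu : probability T R)
  (g : T -> R) (c : R) :
  measurable_fun setT g -> (forall x, 0 <= g x <= c) ->
  mu.-integrable setT (fun x => (g x)%:E).
Proof.
move=> mg gc; apply/integrableP; split; first exact/measurable_EFinP.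
apply: (@le_lt_trans _ _ (\int[mu]_(x in setT) (cst c%:E x))%E).
  apply: ge0_le_integral => //.
  - apply: measurableT_comp => //; exact/measurable_EFinP.
  - by move=> x _; have /andP[g0 gc'] := gc x; rewrite gee0_abs ?lee_fin.
rewrite integral_cst // [X in (_ * X)%E](probability_setT mu).
by rewrite mule1 ltry.
Qed.

Lemma emin_fin {R : realType} (h : \bar R) (L : nat) :
  (0 <= h)%E -> emin h (L%:R)%:E \is a fin_num.
Proof.
move=> h0; rewrite ge0_fin_numE; last by rewrite /emin le_min h0 /= lee_fin ler0n.
by rewrite /emin (le_lt_trans _ (ltry (L%:R))) // ge_min lexx orbT.
Qed.

Lemma key_mix {R : realType} {N : nat} (mu : probability (Seq N) R) (kappa : R)
  (M : nat) (p : int)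
  (psi_mix : forall (f g : Seq N -> R),
      (forall x, 0 <= f x) -> (forall x, 0 <= g x) ->
      measurable_fun setT f -> measurable_fun setT g ->
      mu.-integrable setT (fun x => (f x)%:E) ->
      mu.-integrable setT (fun x => (g x)%:E) ->
      (forall x y : Seq N, (forall j : int, j <= p -> x j = y j) ->
          f x = f y) ->
      (forall x y : Seq N, (forall j : int, p + M%:Z <= j -> x j = y j) ->
          g x = g y) ->
      ((kappa^-1)%:E * ((\int[mu]_x (f x)%:E) * (\int[mu]_x (g x)%:E))
         <= \int[mu]_x (f x * g x)%:E)%E /\
      (\int[mu]_x (f x * g x)%:E
         <= kappa%:E * ((\int[mu]_x (f x)%:E) * (\int[mu]_x (g x)%:E)))%E)
  (kappa_gt0 : 0 < kappa)
  (S' : set (Seq N)) (G : Seq N -> \bar R) :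
  measurable S' ->
  (forall x y : Seq N, (forall j : int, j <= p -> x j = y j) -> S' x -> S' y) ->
  (forall x, 0 <= G x)%E ->
  (forall L : nat, measurable_fun [set: Seq N] (fun x => emin (G x) (L%:R)%:E)) ->
  (forall L : nat, measurable_fun [set: Seq N] (fun x => fine (emin (G x) (L%:R)%:E))) ->
  (forall x y : Seq N, (forall j : int, p + M%:Z <= j -> x j = y j) -> G x = G y) ->
  ((kappa^-1)%:E * mu S' * \int[mu]_x G x <= \int[mu]_x (G \_ S') x)%E /\
  (\int[mu]_x (G \_ S') x <= kappa%:E * mu S' * \int[mu]_x G x)%E.
Proof.
move=> mS lS G0 mGe mGr lG.
set GL := fun (L : nat) x => emin (G x) (L%:R)%:E.
have GL0 : forall L x, (0 <= GL L x)%E.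
  by move=> L x; rewrite /GL /emin le_min G0 /= lee_fin ler0n.
have eqP' : forall L, (fun x => emin ((G \_ S') x) (L%:R)%:E) = (GL L) \_ S'.
  move=> L; apply/funext => x; rewrite !patch_val /GL; case: (x \in S') => //.
  by rewrite /emin min_l // lee_fin ler0n.
have IG := int_sup mu G G0 mGe.
have IGS : (\int[mu]_x (G \_ S') x =
   ereal_sup (range (fun L : nat => \int[mu]_x ((GL L) \_ S') x)))%E.
  rewrite (@int_sup _ _ _ mu (G \_ S')).
  - by congr ereal_sup; congr image; apply/funext => L; rewrite eqP'.
  - by move=> x; rewrite patch_val; case: (x \in S') => //.
  - by move=> L; rewrite eqP'; apply: patch_meas => //; exact: mGe.
have step : forall L : nat,
  ((kappa^-1)%:E * (mu S' * \int[mu]_x GL L x) <= \int[mu]_x ((GL L) \_ S') x)%E /\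
  (\int[mu]_x ((GL L) \_ S') x <= kappa%:E * (mu S' * \int[mu]_x GL L x))%E.
  move=> L.
  have gE : forall x, ((fine (GL L x))%:E = GL L x)%E by move=> x; rewrite fineK // emin_fin.
  have g0 : forall x, 0 <= fine (GL L x) by move=> x; exact: fine_ge0.
  have gc : forall x, 0 <= fine (GL L x) <= L%:R.
    move=> x; rewrite g0 /= -lee_fin gE /GL /emin ge_min lexx orbT //.
  have := psi_mix (\1_S' : Seq N -> R) (fun x => fine (GL L x)).
  have fE : (\int[mu]_x (\1_S' x : R)%:E = mu S')%E.
    by rewrite integral_indic // setIT.
  have gI : (\int[mu]_x (fine (GL L x))%:E = \int[mu]_x GL L x)%E.
    by apply: eq_integral => x _; rewrite gE.
  have fgI : (\int[mu]_x ((\1_S' x : R) * fine (GL L x))%:E = \int[mu]_x ((GL L) \_ S') x)%E.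
    apply: eq_integral => x _; rewrite patch_val indicE.
    by case: (x \in S'); rewrite ?mul1r ?mul0r ?gE.
  rewrite fE gI fgI; apply.
  - by move=> x; rewrite indicE; case: (x \in S').
  - exact: g0.
  - exact: measurable_indic mS.
  - exact: mGr.
  - apply: (@int_bounded _ _ _ mu _ 1) => //.
    by move=> x; rewrite indicE; case: (x \in S') => /=; rewrite ?lexx ?ler01.
  - by apply: (@int_bounded _ _ _ mu _ L%:R) => //; exact: mGr.
  - move=> x y H; rewrite !indicE.
    have -> : (x \in S') = (y \in S') => //.
    apply/idP/idP => /set_mem h; apply/mem_set; move: h; apply: lS => // j jp.
    by rewrite H.
  - by move=> x y H; rewrite /GL (lG x y H).
have aLe : forall L : nat, (\int[mu]_x GL L x <= \int[mu]_x G x)%E.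
  by move=> L; rewrite IG; apply: ereal_sup_ubound; exists L.
have mS0 : (0 <= mu S')%E by [].
have mSfin : mu S' \is a fin_num.
  by rewrite ge0_fin_numE // (le_lt_trans (probability_le1 _ mS)) ?ltry.
split.
  rewrite IGS IG.
  have r0 : 0 <= kappa^-1 * fine (mu S').
    by rewrite mulr_ge0 // ?invr_ge0 ?(ltW kappa_gt0) // fine_ge0.
  have -> : ((kappa^-1)%:E * mu S' = (kappa^-1 * fine (mu S'))%:E)%E.
    by rewrite EFinM fineK.
  rewrite -ereal_supZl //; last by apply/set0P; exists (\int[mu]_x GL 0%N x)%E; exists 0%N.
  apply: ge_ereal_sup => _ [_ [L _ <-] <-].
  apply: (@le_trans _ _ (\int[mu]_x ((GL L) \_ S') x)%E); last first.
    by apply: ereal_sup_ubound; exists L.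
  rewrite EFinM fineK // -muleA; case: (step L) => h _; exact: h.
rewrite IGS; apply: ge_ereal_sup => _ [L _ <-].
apply: le_trans (proj2 (step L)) _; rewrite -muleA.
apply: lee_wpmul2l; first by rewrite lee_fin ltW.
apply: lee_wpmul2l => //.
Qed.
Theorem lemma3p3 (R : realType) (N : nat) (A : 'M[int]_N.+1)
  (A01 : zero_one_mx A) (Aaper : aperiodic_mx A)
  (phi : (int -> 'I_N.+1) -> R) (phi_holder : holder A phi)
  (mu : probability (Seq N) R) (mu_eq : equilibrium_state A phi mu)
  (mu_unique : forall nu : probability (Seq N) R,
      equilibrium_state A phi nu -> nu = mu :> (set (Seq N) -> \bar R))
  (M : nat) (kappa : R) (M_gt0 : (0 < M)%N) (kappa_gt1 : 1 < kappa)
  (psi_mix : forall (p : int) (f g : Seq N -> R),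
      (forall x, 0 <= f x) -> (forall x, 0 <= g x) ->
      measurable_fun setT f -> measurable_fun setT g ->
      mu.-integrable setT (fun x => (f x)%:E) ->
      mu.-integrable setT (fun x => (g x)%:E) ->
      (forall x y : Seq N, (forall j : int, j <= p -> x j = y j) ->
          f x = f y) ->
      (forall x y : Seq N, (forall j : int, p + M%:Z <= j -> x j = y j) ->
          g x = g y) ->
      ((kappa^-1)%:E * ((\int[mu]_x (f x)%:E) * (\int[mu]_x (g x)%:E))
         <= \int[mu]_x (f x * g x)%:E)%E /\
      (\int[mu]_x (f x * g x)%:E
         <= kappa%:E * ((\int[mu]_x (f x)%:E) * (\int[mu]_x (g x)%:E)))%E)
  (m : nat) (Rs S : set (Seq N))
  (hR : cyl_union A m Rs) (hS : cyl_union A m S)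
  (n : nat) (hn : (M + 2 * m <= n)%N) (alpha : R) :
  (0 <= alpha ->
     ((kappa^-1)%:E * mu S
        * \int[mu]_x exp_return Rs alpha (n - (M + 2 * m)) x
      <= \int[mu]_(x in S) exp_return Rs alpha n x)%E /\
     (\int[mu]_(x in S) exp_return Rs alpha n x
      <= kappa%:E * mu S * (expR (alpha * (M + 2 * m)%:R))%:E
           * \int[mu]_x exp_return Rs alpha n x)%E) /\
  (alpha <= 0 ->
     ((kappa^-1)%:E * mu S * (expR (alpha * (M + 2 * m)%:R))%:E
        * \int[mu]_x exp_return Rs alpha n x
      <= \int[mu]_(x in S) exp_return Rs alpha n x)%E /\
     (\int[mu]_(x in S) exp_return Rs alpha n x
      <= kappa%:E * mu S
           * \int[mu]_x exp_return Rs alpha (n - (M + 2 * m)) x)%E).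
Proof.
have [[muS1 Hinv] _] := mu_eq.
have kappa_gt0 : 0 < kappa by apply: lt_trans ltr01 kappa_gt1.
have [R' [lR ->]] := cyl_union_decomp _ _ _ hR.
have [S' [lS ->]] := cyl_union_decomp _ _ _ hS.
set K := (M + 2 * m)%N.
have mSig := SigmaA_measurable (N := N) A.
have mS' : measurable (S' : set (Seq N)) := localr_measurable _ _ lS.
have mG : forall n' d' (T' : measurableType d') (h : option nat -> T'),
    measurable_fun [set: Seq N] (fun x => h (nth_return R' n' (iter_shift K x))).
  move=> n' d' T' h.
  exact: (meas_opt (fun x : Seq N => nth_return R' n' (iter_shift K x))
     (fun k => fiber_meas_shift _ _ _ _ _ lR) d' T' h).
have mE' : forall n' d' (T' : measurableType d') (h : option nat -> T'),
    measurable_fun [set: Seq N] (fun x => h (nth_return R' n' x)).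
  move=> n' d' T' h.
  exact: (meas_opt (fun x : Seq N => nth_return R' n' x)
     (fun k => fiber_meas _ _ _ _ lR) d' T' h).
have mE : forall n' d' (T' : measurableType d') (h : option nat -> T'),
    measurable_fun [set: Seq N] (fun x => h (nth_return (SigmaA A `&` R') n' x)).
  move=> n' d' T' h.
  exact: (meas_opt (fun x : Seq N => nth_return (SigmaA A `&` R') n' x)
     (fun k => fiber_meas_Rs _ _ _ _ _ lR) d' T' h).
have intS : forall n', (\int[mu]_(x in SigmaA A `&` S') exp_return (SigmaA A `&` R') alpha n' x =
    \int[mu]_x ((fun x => exp_return R' alpha n' x) \_ S') x)%E.
  move=> n'; rewrite integral_mkcond.
  apply: ge0_ae_eq_integral => //.
  - apply: patch_meas; first exact: measurableI.
    exact: (mE n' _ _ (ev alpha)).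
  - by apply: patch_meas => //; exact: (mE' n' _ _ (ev alpha)).
  - by move=> x _; rewrite patch_val; case: ifP => // _; exact: ev_ge0.
  - by move=> x _; rewrite patch_val; case: ifP => // _; exact: ev_ge0.
  rewrite /ae_eq; apply: (ae_Sigma A mu muS1) => x Sx _; rewrite !patch_val.
  have -> : (x \in SigmaA A `&` S') = (x \in S').
    by apply/idP/idP => /set_mem h; apply/mem_set; [case: h | split].
  by rewrite /exp_return nth_Rs_in.
have intT : forall n', (\int[mu]_x exp_return (SigmaA A `&` R') alpha n' x =
    \int[mu]_x exp_return R' alpha n' x)%E.
  move=> n'; apply: ge0_ae_eq_integral => //.
  - exact: (mE n' _ _ (ev alpha)).
  - exact: (mE' n' _ _ (ev alpha)).
  - by move=> x _; exact: ev_ge0.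
  - by move=> x _; exact: ev_ge0.
  rewrite /ae_eq; apply: (ae_Sigma A mu muS1) => x Sx _.
  by rewrite /exp_return nth_Rs_in.
have muS : mu (SigmaA A `&` S') = mu S'.
  have mSS : measurable (SigmaA A `&` S' : set (Seq N)) by exact: measurableI.
  have -> : mu (SigmaA A `&` S') = (\int[mu]_x (\1_(SigmaA A `&` S') x : R)%:E)%E.
    by rewrite integral_indic // setIT.
  have -> : mu S' = (\int[mu]_x (\1_S' x : R)%:E)%E.
    by rewrite integral_indic // setIT.
  apply: ge0_ae_eq_integral => //.
  all: try by apply/measurable_EFinP; apply: measurable_indic.
  all: try by move=> x _; rewrite lee_fin indicE; case: (_ \in _).
  rewrite /ae_eq; apply: (ae_Sigma A mu muS1) => x Sx _; rewrite !indicE.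
  have -> : (x \in SigmaA A `&` S') = (x \in S').
    by apply/idP/idP => /set_mem h; apply/mem_set; [case: h | split].
  by [].
have intG : forall n', (\int[mu]_x exp_return R' alpha n' (iter_shift K x) =
    \int[mu]_x exp_return R' alpha n' x)%E.
  move=> n'; apply: (int_shift mu Hinv K (fun x => exp_return R' alpha n' x)).
  - exact: (mE' n' _ _ (ev alpha)).
  - by move=> x; exact: ev_ge0.
have keyn : forall n',
  ((kappa^-1)%:E * mu S' * \int[mu]_x exp_return R' alpha n' (iter_shift K x)
     <= \int[mu]_x ((fun x => exp_return R' alpha n' (iter_shift K x)) \_ S') x)%E /\
  (\int[mu]_x ((fun x => exp_return R' alpha n' (iter_shift K x)) \_ S') x
     <= kappa%:E * mu S' * \int[mu]_x exp_return R' alpha n' (iter_shift K x))%E.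
  move=> n'.
  apply: (@key_mix R N mu kappa M m%:Z (psi_mix m%:Z) kappa_gt0 S'
    (fun x => exp_return R' alpha n' (iter_shift K x))) => //.
  - move=> x y H; apply: lS => j jm; apply: H; lia.
  - by move=> x; exact: ev_ge0.
  - by move=> L; exact: (mG n' _ _ (fun o => emin (ev alpha o) (L%:R)%:E)).
  - by move=> L; exact: (mG n' _ _ (fun o => fine (emin (ev alpha o) (L%:R)%:E))).
  - move=> x y H; rewrite /exp_return; congr ev; apply: nth_return_ext => j j0.
    apply: (localr_iff _ _ _ _ lR) => i im; rewrite !iter_shiftE; apply: H.
    rewrite /K; lia.
have intZ : forall (f : Seq N -> \bar R) (c : R), 0 <= c -> measurable_fun setT f ->
    (forall x, 0 <= f x)%E ->
    (\int[mu]_x ((fun x => c%:E * f x) \_ S') x = c%:E * \int[mu]_x (f \_ S') x)%E.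
  move=> f c c0 mf f0.
  transitivity (\int[mu]_x (c%:E * (f \_ S') x))%E.
    by apply: eq_integral => x _; rewrite !patch_val; case: ifP => _; rewrite ?mule0.
  apply: ge0_integralZl_EFin => //; first by move=> x _; rewrite patch_val; case: ifP.
  exact: patch_meas.
have c0 : 0 <= expR (alpha * K%:R) by exact: expR_ge0.
split => a0; split.
- rewrite muS intT intS -(intG (n - K)%N).
  apply: le_trans (proj1 (keyn (n - K)%N)) _.
  apply: ge0_le_integral => //.
  + by move=> x _; rewrite patch_val; case: ifP => // _; exact: ev_ge0.
  + by apply: patch_meas => //; exact: (mG _ _ _ (ev alpha)).
  + by apply: patch_meas => //; exact: (mE' _ _ _ (ev alpha)).
  + move=> x _; rewrite !patch_val; case: ifP => // _.
    by apply: ev_mono_pos => //; exact: nth_L.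
- rewrite muS intT intS -(intG n).
  apply: (@le_trans _ _ (\int[mu]_x ((fun x => (expR (alpha * K%:R))%:E *
      exp_return R' alpha n (iter_shift K x)) \_ S') x)%E).
    apply: ge0_le_integral => //.
    + by move=> x _; rewrite patch_val; case: ifP => // _; exact: ev_ge0.
    + by apply: patch_meas => //; exact: (mE' _ _ _ (ev alpha)).
    + apply: patch_meas => //.
      exact: (mG n _ _ (fun o => (expR (alpha * K%:R))%:E * ev alpha o)%E).
    + move=> x _; rewrite !patch_val; case: ifP => // _.
      rewrite /exp_return -ev_shift.
      by apply: ev_mono_pos => //; exact: nth_U.
  rewrite intZ //; last by move=> x; exact: ev_ge0.
    apply: le_trans (lee_wpmul2l _ (proj2 (keyn n))) _; first by rewrite lee_fin.
    by rewrite muleCA muleA.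
  exact: (mG n _ _ (ev alpha)).
- rewrite muS intT intS -(intG n).
  rewrite muleAC muleC.
  apply: le_trans (lee_wpmul2l _ (proj1 (keyn n))) _; first by rewrite lee_fin.
  rewrite -intZ //; last by move=> x; exact: ev_ge0.
    apply: ge0_le_integral => //.
    + by move=> x _; rewrite patch_val; case: ifP => // _; rewrite mule_ge0 ?lee_fin ?ev_ge0.
    + apply: patch_meas => //.
      exact: (mG n _ _ (fun o => (expR (alpha * K%:R))%:E * ev alpha o)%E).
    + by apply: patch_meas => //; exact: (mE' _ _ _ (ev alpha)).
    + move=> x _; rewrite !patch_val; case: ifP => // _.
      rewrite /exp_return -ev_shift.
      by apply: ev_mono_neg => //; exact: nth_U.
  exact: (mG n _ _ (ev alpha)).
- rewrite muS intT intS -(intG (n - K)%N).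
  apply: le_trans _ (proj2 (keyn (n - K)%N)).
  apply: ge0_le_integral => //.
  + by move=> x _; rewrite patch_val; case: ifP => // _; exact: ev_ge0.
  + by apply: patch_meas => //; exact: (mE' _ _ _ (ev alpha)).
  + by apply: patch_meas => //; exact: (mG _ _ _ (ev alpha)).
  + move=> x _; rewrite !patch_val; case: ifP => // _.
    by apply: ev_mono_neg => //; exact: nth_L.
Qed.
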